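(* Every WD-algebra $\mathbf A$ is isomorphic to a subalgebra of $\mathcal A(\mathcal F(\mathbf A))$; more precisely, the map $\sigma_{\mathbf A}(a)=\{P\in X(\mathbf A)\colon a\in P\}$ is an injective homomorphism from $\mathbf A$ into $\mathcal A(\mathcal F(\mathbf A))$.
   Context: A WD-algebra is an algebra $(A,\wedge,\vee,\leftarrow,0,1)$ such that $(A,\wedge,\vee,0,1)$ is a bounded distributive lattice and for all $a,b,c\in A$: $a\leftarrow a=0$; $(a\vee b)\leftarrow c=(a\leftarrow c)\vee(b\leftarrow c)$; $a\leftarrow(b\wedge c)=(a\leftarrow b)\vee(a\leftarrow c)$; $a\leftarrow c\le(a\leftarrow b)\vee(b\leftarrow c)$. $X(\mathbf A)$ is the set of prime filters of $\mathbf A$; $S_{\mathbf A}$ is the relation on $X(\mathbf A)$ with $(P,Q)\in S_{\mathbf A}$ iff for all $a,b\in A$, $a\in Q$ and $b\notin Q$ imply $a\leftarrow b\in P$. $\mathcal F(\mathbf A)=(X(\mathbf A),\subseteq,S_{\mathbf A})$. For a structure $\mathcal F=(X,\le,S)$, $\mathcal A(\mathcal F)=(\mathrm{Up}(X),\cap,\cup,\Leftarrow_S,\emptyset,X)$, where $\mathrm{Up}(X)$ is the set of upsets of $(X,\le)$ and $U\Leftarrow_S V=\{x\in X\colon S(x)\cap(U\setminus V)\neq\emptyset\}$ with $S(x)=\{y\colon(x,y)\in S\}$. *)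

(* Defs.v *)
From HB Require Import structures.
From mathcomp Require Import all_boot all_order.
Set Implicit Arguments. Unset Strict Implicit. Unset Printing Implicit Defensive.
Import Order.TTheory.
Local Open Scope order_scope.

Section WD.
Context {disp : Order.disp_t} {A : tbDistrLatticeType disp}.

(* The WD-algebra axioms for the extra operation [imp] (written a <- b). *)
Definition WD_axioms (imp : A -> A -> A) : Prop :=
  [/\ (forall a, imp a a = \bot),
      (forall a b c, imp (a `|` b) c = imp a c `|` imp b c),
      (forall a b c, imp a (b `&` c) = imp a b `|` imp a c)
    & (forall a b c, imp a c <= imp a b `|` imp b c)].

Definition prime_filter (P : A -> Prop) : Prop :=
  [/\ P \top,
      (forall a b, a <= b -> P a -> P b),
      (forall a b, P a -> P b -> P (a `&` b)),
      ~ P \bot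
    & (forall a b, P (a `|` b) -> P a \/ P b)].

Definition primeX := {P : A -> Prop | prime_filter P}.

Definition X_le (P Q : primeX) : Prop := forall a, proj1_sig P a -> proj1_sig Q a.

Definition S_rel (imp : A -> A -> A) (P Q : primeX) : Prop :=
  forall a b, proj1_sig Q a -> ~ proj1_sig Q b -> proj1_sig P (imp a b).

Definition upset (U : primeX -> Prop) : Prop :=
  forall x y, X_le x y -> U x -> U y.

Definition Simp (S : primeX -> primeX -> Prop) (U V : primeX -> Prop) : primeX -> Prop :=
  fun x => exists y, S x y /\ U y /\ ~ V y.

Definition sigmaA (a : A) : primeX -> Prop := fun P => proj1_sig P a.

End WD.

(* Main.v *)
Require Import Defs.
From HB Require Import structures.
From mathcomp Require Import all_boot all_order.
From mathcomp Require Import boolp.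
From mathcomp Require classical_sets.
Import Order.TTheory.
Local Open Scope order_scope.

Section Sep.
Context {disp : Order.disp_t} {A : tbDistrLatticeType disp}.
Variable K : A -> A -> Prop.
Hypothesis Kle : forall x y : A, x <= y -> K x y.
Hypothesis Ktr : forall x y z, K x y -> K y z -> K x z.
Hypothesis KmR : forall c d e, K c d -> K c e -> K c (d `&` e).
Hypothesis KjL : forall c c' d, K c d -> K c' d -> K (c `|` c') d.
Variables a b : A.
Hypothesis nKab : ~ K a b.

Definition good (X : A -> Prop) : Prop :=
  [/\ X a, ~ X b, (forall c d, K c d -> X c -> X d)
    & (forall c d, X c -> X d -> X (c `&` d))].

Definition GT := {X : A -> Prop | good X}.

Lemma good_delta : good (K a).
Proof.
split => //; first exact: Kle.
- move=> c d Kcd Kac; exact: Ktr Kac Kcd.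
- move=> c d; exact: KmR.
Qed.

Definition Rg (X Y : GT) : bool := `[< forall x, proj1_sig X x -> proj1_sig Y x >].

Lemma sep_exists : exists Q : A -> Prop, prime_filter Q /\ Q a /\ ~ Q b /\
   (forall c d, K c d -> Q c -> Q d).
Proof.
have := @classical_sets.ZL_preorder GT (exist _ _ good_delta) Rg.
case.
- by move=> t; apply/asboolP.
- move=> r s t /asboolP H1 /asboolP H2; apply/asboolP => x /H1; exact: H2.
- move=> C Ctot.
  pose U x := K a x \/ exists X : GT, C X /\ proj1_sig X x.
  have gU : good U.
    split.
    + by left; apply: Kle.
    + case=> [//|[X [_ /= XB]]]; have [Xa Xb XK Xm] := proj2_sig X; exact: Xb.
    + move=> c d Kcd [Kac|[X [CX /= Xc]]].
        by left; exact: Ktr Kac Kcd.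
      have [Xa Xb XK Xm] := proj2_sig X.
      by right; exists X; split => //=; exact: XK Xc.
    + move=> c d [Kac|[X [CX /= Xc]]] [Kad|[Y [CY /= Yd]]].
      * by left; apply: KmR.
      * have [Ya Yb YK Ym] := proj2_sig Y.
        right; exists Y; split => //=.
        apply: Ym => //; exact: YK Kac Ya.
      * have [Xa Xb XK Xm] := proj2_sig X.
        right; exists X; split => //=.
        apply: Xm => //; exact: XK Kad Xa.
      * have [Ya Yb YK Ym] := proj2_sig Y.
        have [Xa Xb XK Xm] := proj2_sig X.
        have := Ctot _ _ CX CY; case=> /asboolP /= H.
          right; exists Y; split => //=.
          by apply: Ym => //; apply: H.
        right; exists X; split => //=.
        by apply: Xm => //; apply: H.
  exists (exist _ U gU) => s Cs; apply/asboolP => x sx /=.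
  by right; exists s.
move=> M0 Mmax; have [Ma Mb MK Mm] := proj2_sig M0; set M := proj1_sig M0 in Ma Mb MK Mm *.
exists M; split; last by [].
have Mle : forall c d, c <= d -> M c -> M d by move=> c d /Kle; exact: MK.
split.
- by apply: Mle Ma; exact: lex1.
- exact: Mle.
- exact: Mm.
- by move=> Mbot; apply: Mb; apply: Mle Mbot; exact: le0x.
move=> x y Mxy.
have key : forall z, ~ M z -> exists m, M m /\ K (m `&` z) b.
  move=> z Mz; apply: contrapT => nex.
  pose Mz' d := exists m, M m /\ K (m `&` z) d.
  have gz : good Mz'.
    split.
    + by exists a; split => //; apply: Kle; exact: leIl.
    + by move=> [m [Mm' Kmb]]; apply: nex; exists m.
    + by move=> c d Kcd [m [Mm' Kmc]]; exists m; split => //; exact: Ktr Kmc Kcd.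
    + move=> c d [m [Mm1 Kmc]] [m' [Mm2 Kmd]]; exists (m `&` m'); split; first exact: Mm.
      apply: KmR.
      * apply: Ktr Kmc; apply: Kle; rewrite lexI leIr andbT.
        exact: le_trans (leIl _ _) (leIl _ _).
      * apply: Ktr Kmd; apply: Kle; rewrite lexI leIr andbT.
        exact: le_trans (leIl _ _) (leIr _ _).
  have := Mmax (exist _ Mz' gz).
  have H : Rg M0 (exist _ Mz' gz).
    apply/asboolP => c /= Mc; exists c; split => //; apply: Kle; exact: leIl.
  move=> /(_ H) /asboolP /= Hz; apply: Mz; apply: Hz.
  by exists a; split => //; apply: Kle; exact: leIr.
case: (pselect (M x)) => [|nx]; first by left.
case: (pselect (M y)) => [|ny]; first by right.
exfalso.
have [m [Mm1 Kmx]] := key _ nx.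
have [m' [Mm2 Kmy]] := key _ ny.
apply: Mb; apply: (MK ((m `&` m') `&` (x `|` y))); last exact: (Mm _ _ (Mm _ _ Mm1 Mm2) Mxy).
rewrite meetUr; apply: KjL.
- apply: Ktr Kmx; apply: Kle; apply: leI2 => //; exact: leIl.
- apply: Ktr Kmy; apply: Kle; apply: leI2 => //; exact: leIr.
Qed.

End Sep.

Section Main.
Context {disp : Order.disp_t} {A : tbDistrLatticeType disp}.
Variable imp : A -> A -> A.
Hypothesis hWD : WD_axioms imp.

Lemma imp_mono1 c c' d : c <= c' -> imp c d <= imp c' d.
Proof.
case: hWD => _ hj _ _ => /join_idPr <-; rewrite hj; exact: leUl.
Qed.

End Main.

Theorem theorem3p12 (disp : Order.disp_t) (A : tbDistrLatticeType disp)
    (imp : A -> A -> A) (hWD : WD_axioms imp) :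
  (* sigma_A maps into Up(X(A)) *)
  (forall a : A, upset (sigmaA a)) /\
  (* injective *)
  (forall a b : A, sigmaA a = sigmaA b -> a = b) /\
  (* homomorphism into A(F(A)) = (Up(X), cap, cup, <=_S, emptyset, X) *)
  (forall a b : A, sigmaA (a `&` b) = (fun x => sigmaA a x /\ sigmaA b x)) /\
  (forall a b : A, sigmaA (a `|` b) = (fun x => sigmaA a x \/ sigmaA b x)) /\
  (forall a b : A, sigmaA (imp a b) = Simp (S_rel imp) (sigmaA a) (sigmaA b)) /\
  sigmaA (\bot : A) = (fun _ => False) /\
  sigmaA (\top : A) = (fun _ => True).
Proof.
have Qsep : forall a b : A, ~ (a <= b) -> exists Q : primeX, proj1_sig Q a /\ ~ proj1_sig Q b.
  move=> a b nab.
  have [||||Q [pQ [Qa [Qb _]]]] := @sep_exists _ A (fun x y => x <= y) _ _ _ _ a b nab.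
  - by [].
  - move=> x y z; exact: le_trans.
  - by move=> c d e cd ce; rewrite lexI cd ce.
  - by move=> c c' d cd cd'; rewrite leUx cd cd'.
  by exists (exist _ Q pQ).
split; first by move=> a x y; apply.
split.
  move=> a b e.
  have le_ab : forall a b : A, sigmaA a = sigmaA b -> a <= b.
    move=> a' b' e'; case: (boolP (a' <= b')) => // /negP nab.
    have [Q [Qa Qb]] := Qsep _ _ nab; exfalso; apply: Qb.
    by have := f_equal (fun f => f Q) e'; rewrite /sigmaA => <-.
  by apply: le_anti; rewrite !le_ab.
split.
  move=> a b; apply: funext => -[P [Pt Pu Pm Pb Pp]]; apply: propext; rewrite /sigmaA /=.
  split; last by case; exact: Pm.
  by move=> H; split; apply: Pu H; [exact: leIl | exact: leIr].
split.
  move=> a b; apply: funext => -[P [Pt Pu Pm Pb Pp]]; apply: propext; rewrite /sigmaA /=.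
  split; first exact: Pp.
  by case=> H; apply: Pu H; [exact: leUl | exact: leUr].
split.
  move=> a b; apply: funext => -[P pP]; apply: propext; rewrite /sigmaA /Simp /=.
  have [Pt Pu Pm Pb Pp] := pP.
  case: (hWD) => hid hj hm htr.
  split; last first.
    by case=> y [Sy [ya yb]]; exact: Sy.
  move=> Pab.
  have [|||| Q [pQ [Qa [Qb QK]]]] :=
    @sep_exists _ A (fun c d => ~ P (imp c d)) _ _ _ _ a b (fun H => H Pab).
  - move=> x y xy Pxy; apply: Pb; apply: Pu Pxy; rewrite -(hid y).
    exact: imp_mono1.
  - move=> x y z nxy nyz Pxz.
    have := Pu _ _ (htr x y z) Pxz; case/Pp; [exact: nxy | exact: nyz].
  - by move=> c d e ncd nce; rewrite hm => /Pp [].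
  - by move=> c c' d ncd nc'd; rewrite hj => /Pp [].
  exists (exist _ Q pQ); split; last by split.
  move=> c d /= Qc Qd; apply: contrapT => nP; apply: Qd; exact: QK nP Qc.
split.
  apply: funext => -[P [Pt Pu Pm Pb Pp]]; apply: propext; rewrite /sigmaA /=; by split.
apply: funext => -[P [Pt Pu Pm Pb Pp]]; apply: propext; rewrite /sigmaA /=; by split.
Qed.
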